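(* For $n>2$, there is no non-vanishing real exterior $3$-form on $\mathbb{C}^{n+1}=\mathbb{R}^{n+1}+i\mathbb{R}^{n+1}$ (viewed as a real vector space) invariant under the action of ${\sf SO}(1,n)$.
   Context: ${\sf SO}(1,n)$ is the special orthogonal group of the Lorentz form $-x_0^2+x_1^2+\dots+x_n^2$ on $\mathbb{R}^{n+1}$, acting on $\mathbb{C}^{n+1}=\mathbb{R}^{n+1}+i\mathbb{R}^{n+1}$ diagonally by $A(x+iy)=Ax+iAy$. *)

(* Defs.v *)
From HB Require Import structures.
From mathcomp Require Import all_boot all_order all_algebra.
From mathcomp Require Import reals.
Set Implicit Arguments. Unset Strict Implicit. Unset Printing Implicit Defensive.
Import Order.TTheory GRing.Theory Num.Theory.
Local Open Scope ring_scope.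

(* C^(n+1) = R^(n+1) + i R^(n+1), viewed as a real vector
   space, is represented by pairs (x, y) standing for x + i y. *)
Definition Cvec (R : realType) (n : nat) : Type := ('cV[R]_(n.+1) * 'cV[R]_(n.+1))%type.

Definition cadd (R : realType) (n : nat) (u v : Cvec R n) : Cvec R n :=
  (u.1 + v.1, u.2 + v.2).
Definition cscale (R : realType) (n : nat) (a : R) (u : Cvec R n) : Cvec R n :=
  (a *: u.1, a *: u.2).

Definition cact (R : realType) (n : nat) (A : 'M[R]_(n.+1)) (u : Cvec R n) : Cvec R n :=
  (A *m u.1, A *m u.2).

(* Gram matrix of the Lorentz form -x_0^2 + x_1^2 + ... + x_n^2. *)
Definition lorentzJ (R : realType) (n : nat) : 'M[R]_(n.+1) :=
  diag_mx (\row_(i < n.+1) (if i == ord0 then -1 else 1)).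

Definition SO1n (R : realType) (n : nat) (A : 'M[R]_(n.+1)) : Prop :=
  A^T *m lorentzJ R n *m A = lorentzJ R n /\ \det A = 1.

Definition trilinear (R : realType) (n : nat) (w : Cvec R n -> Cvec R n -> Cvec R n -> R) : Prop :=
  (forall a u u' v z, w (cadd (cscale a u) u') v z = a * w u v z + w u' v z) /\
  (forall a u v v' z, w u (cadd (cscale a v) v') z = a * w u v z + w u v' z) /\
  (forall a u v z z', w u v (cadd (cscale a z) z') = a * w u v z + w u v z').

Definition alternating (R : realType) (n : nat) (w : Cvec R n -> Cvec R n -> Cvec R n -> R) : Prop :=
  forall u v, w u u v = 0 /\ w u v u = 0 /\ w v u u = 0.

Definition ext3form (R : realType) (n : nat) (w : Cvec R n -> Cvec R n -> Cvec R n -> R) : Prop :=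
  trilinear w /\ alternating w.

Definition SO1n_invariant (R : realType) (n : nat) (w : Cvec R n -> Cvec R n -> Cvec R n -> R) : Prop :=
  forall A, SO1n A -> forall u v z, w (cact A u) (cact A v) (cact A z) = w u v z.

(* Main.v *)
Require Import Defs.
From mathcomp Require Import all_boot all_order all_algebra.
From mathcomp Require Import reals.
From mathcomp Require Import ring lra.
Import Order.TTheory GRing.Theory Num.Theory.
Local Open Scope ring_scope.

Definition czero (R : realType) (n : nat) : Cvec R n := (0, 0).

Lemma cscale1 (R : realType) (n : nat) (u : Cvec R n) : cscale 1 u = u.
Proof. by case: u => a b; rewrite /cscale /= !scale1r. Qed.

Lemma caddz (R : realType) (n : nat) (u : Cvec R n) : cadd u (czero R n) = u.
Proof. by case: u => a b; rewrite /cadd /= !addr0. Qed.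

Section W.
Variables (R : realType) (n : nat) (w : Cvec R n -> Cvec R n -> Cvec R n -> R).
Hypothesis H : trilinear w.

Lemma w1add u u' v z : w (cadd u u') v z = w u v z + w u' v z.
Proof. by have := H.1 1 u u' v z; rewrite cscale1 mul1r. Qed.
Lemma w2add u v v' z : w u (cadd v v') z = w u v z + w u v' z.
Proof. by have := H.2.1 1 u v v' z; rewrite cscale1 mul1r. Qed.
Lemma w3add u v z z' : w u v (cadd z z') = w u v z + w u v z'.
Proof. by have := H.2.2 1 u v z z'; rewrite cscale1 mul1r. Qed.
Lemma w1z v z : w (czero R n) v z = 0.
Proof. by have := w1add (czero R n) (czero R n) v z; rewrite caddz; lra. Qed.
Lemma w2z u z : w u (czero R n) z = 0.
Proof. by have := w2add u (czero R n) (czero R n) z; rewrite caddz; lra. Qed.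
Lemma w3z u v : w u v (czero R n) = 0.
Proof. by have := w3add u v (czero R n) (czero R n); rewrite caddz; lra. Qed.
Lemma w1s a u v z : w (cscale a u) v z = a * w u v z.
Proof. by have := H.1 a u (czero R n) v z; rewrite caddz w1z addr0. Qed.
Lemma w2s a u v z : w u (cscale a v) z = a * w u v z.
Proof. by have := H.2.1 a u v (czero R n) z; rewrite caddz w2z addr0. Qed.
Lemma w3s a u v z : w u v (cscale a z) = a * w u v z.
Proof. by have := H.2.2 a u v z (czero R n); rewrite caddz w3z addr0. Qed.

Lemma decompc (x : 'cV[R]_(n.+1)) : x = \sum_i delta_mx i i *m x.
Proof.
rewrite -mulmx_suml; suff -> : \sum_(i < n.+1) delta_mx i i = 1%:M :> 'M[R]_(n.+1) by rewrite mul1mx.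
apply/matrixP => a b; rewrite summxE !mxE (bigD1 a) //= big1 ?addr0 ?mxE ?eqxx //=.
  by rewrite eq_sym.
by move=> i /negbTE hi; rewrite mxE eq_sym hi.
Qed.

Lemma decomp (u : Cvec R n) : u = \big[@cadd R n/czero R n]_i cact (delta_mx i i) u.
Proof.
have f1 : forall F : 'I_n.+1 -> Cvec R n, (\big[@cadd R n/czero R n]_i F i).1 = \sum_i (F i).1.
  by move=> F; apply: (big_morph fst) => //.
have f2 : forall F : 'I_n.+1 -> Cvec R n, (\big[@cadd R n/czero R n]_i F i).2 = \sum_i (F i).2.
  by move=> F; apply: (big_morph snd) => //.
case: u => a b; apply: injective_projections; rewrite ?f1 ?f2 /=; exact: decompc.
Qed.

End W.
Set Implicit Arguments.
Definition epsv (R : realType) (n : nat) (m l : 'I_n.+1) : 'rV[R]_(n.+1) :=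
  \row_t (if (t == m) || (t == l) then -1 else 1).
Definition Dm (R : realType) (n : nat) (m l : 'I_n.+1) : 'M[R]_(n.+1) := diag_mx (epsv R m l).

Lemma eps2 (R : realType) (n : nat) (m l t : 'I_n.+1) : epsv R m l 0 t * epsv R m l 0 t = 1.
Proof. by rewrite mxE; case: ifP => _; rewrite ?mulrNN mulr1. Qed.

Lemma SO1n_D (R : realType) (n : nat) (m l : 'I_n.+1) : m != l -> SO1n (Dm R m l).
Proof.
move=> hml; split.
  rewrite /Dm tr_diag_mx; apply/matrixP => a b.
  rewrite /lorentzJ mul_mx_diag mul_diag_mx !mxE.
  case: (eqVneq a b) => [<-|_]; last by rewrite /= !mulr0n mulr0 mul0r.
  rewrite !mulr1n mulrC mulrA.
  by have := eps2 R m l a; rewrite mxE => ->; rewrite mul1r.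
rewrite /Dm det_diag (bigD1 m) //= (bigD1 l) /=; last by rewrite eq_sym.
rewrite big1 ?mulr1.
  by rewrite /epsv !mxE !eqxx /= orbT mulrNN mulr1.
by move=> i /andP[hm hl]; rewrite /epsv mxE (negbTE hm) (negbTE hl).
Qed.

Lemma cact_D_delta (R : realType) (n : nat) (m l i : 'I_n.+1) (u : Cvec R n) :
  cact (Dm R m l) (cact (delta_mx i i) u) = cscale (epsv R m l 0 i) (cact (delta_mx i i) u).
Proof.
have e : Dm R m l *m delta_mx i i = epsv R m l 0 i *: delta_mx i i.
  apply/matrixP => a b; rewrite mul_diag_mx !mxE.
  by case: (eqVneq a i) => [->|_]; rewrite /= ?mulr0.
by rewrite /cact /cscale /= !mulmxA e !scalemxAl.
Qed.
Lemma term_zero (R : realType) (n : nat) (hn : (2 < n)%N)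
  (w : Cvec R n -> Cvec R n -> Cvec R n -> R) (H : trilinear w) (Hinv : SO1n_invariant w)
  (i j k : 'I_n.+1) u v z :
  w (cact (delta_mx i i) u) (cact (delta_mx j j) v) (cact (delta_mx k k) z) = 0.
Proof.
case: (pickP (fun l : 'I_n.+1 => l \notin [:: i; j; k])) => [l hl|h]; last first.
  have : (#|'I_n.+1| <= 3)%N.
    apply: leq_trans (card_size [:: i; j; k]); apply/subset_leq_card/subsetP => x _.
    by have := h x; rewrite /= => /negbFE.
  by rewrite card_ord ltnS leqNgt hn.
move: hl; rewrite !inE !negb_or => /and3P[hil hjl hkl].
set m := if i == j then k else if i == k then j else i.
have hml : m != l by rewrite /m; case: ifP => _; [|case: ifP => _]; rewrite eq_sym.
have e := Hinv _ (@SO1n_D R n m l hml) (cact (delta_mx i i) u) (cact (delta_mx j j) v) (cact (delta_mx k k) z).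
rewrite !cact_D_delta (@w1s R n w H) (@w2s R n w H) (@w3s R n w H) in e.
move: e; rewrite /epsv !mxE ![_ == l]eq_sym (negbTE hil) (negbTE hjl) (negbTE hkl) !orbF /m.
set W := w _ _ _.
case: (eqVneq i j) => [<-|hij].
  by rewrite eqxx; case: (i == k); lra.
case: (eqVneq i k) => [hik|hik].
  subst k; rewrite (negbTE hij) eqxx; lra.
rewrite eqxx [j == i]eq_sym [k == i]eq_sym (negbTE hij) (negbTE hik); lra.
Qed.
Unset Implicit Arguments.
Theorem fact2p2 (R : realType) (n : nat) (hn : (2 < n)%N)
  (w : Cvec R n -> Cvec R n -> Cvec R n -> R) :
  ext3form w -> SO1n_invariant w ->
  ~ (exists u v z, w u v z != 0).
Proof.
move=> [H _] Hinv [u [v [z /negP hne]]]; apply: hne; apply/eqP.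
have s1 : forall (F : 'I_n.+1 -> Cvec R n) b c,
    w (\big[@cadd R n/czero R n]_i F i) b c = \sum_i w (F i) b c.
  by move=> F b c; apply: (big_morph (fun x => w x b c)) => [x y|]; [exact: w1add | exact: w1z].
have s2 : forall (F : 'I_n.+1 -> Cvec R n) a c,
    w a (\big[@cadd R n/czero R n]_i F i) c = \sum_i w a (F i) c.
  by move=> F a c; apply: (big_morph (fun x => w a x c)) => [x y|]; [exact: w2add | exact: w2z].
have s3 : forall (F : 'I_n.+1 -> Cvec R n) a b,
    w a b (\big[@cadd R n/czero R n]_i F i) = \sum_i w a b (F i).
  by move=> F a b; apply: (big_morph (fun x => w a b x)) => [x y|]; [exact: w3add | exact: w3z].
rewrite (@decomp R n u) (@decomp R n v) (@decomp R n z).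
rewrite s1 big1 // => i _; rewrite s2 big1 // => j _; rewrite s3 big1 // => k _.
exact: term_zero.
Qed.
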